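(* Let $K$ be a commutative unital ring and let $A\in M_n(K)$ be block triangular with associated partition $A=(A_{ij})_{i,j=1}^q$. If $\lambda\in K$ is an eigenvalue of $A$, then $\lambda$ is an eigenvalue of $A_{ii}$ for some $1\le i\le q$.
   Context: $A$ is block lower triangular if there is a partition $A=(A_{ij})_{i,j=1}^q$, $q>1$, with square diagonal blocks $A_{ii}$ and $A_{ij}=0$ for $i<j$; block upper triangular if $A^T$ is block lower triangular (with the transposed partition); block triangular if either. $\lambda\in K$ is an eigenvalue of a square matrix $B$ if $Bv=\lambda v$ for some nonzero column vector $v$ over $K$; equivalently, $\det(\lambda I-B)$ is a zero divisor of $K$ (an element $u$ with $uw=0$ for some $w\ne0$). *)

(* Defs.v *)
From HB Require Import structures.
From mathcomp Require Import all_boot all_order all_algebra.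
Set Implicit Arguments. Unset Strict Implicit. Unset Printing Implicit Defensive.
Import GRing.Theory.
Local Open Scope ring_scope.

Definition is_eigenvalue (K : comPzRingType) (m : nat) (B : 'M[K]_m) (lam : K) : Prop :=
  exists v : 'cV[K]_m, v != 0 /\ B *m v = lam *: v.

(* A square matrix of size \sum_i p i, partitioned into q x q blocks
   A_ij := submxblock A i j of size p i x p j (contiguous, in order). *)
Definition block_lower (K : comPzRingType) (q : nat) (p : 'I_q -> nat)
  (A : 'M[K]_(\sum_(i < q) p i)) : Prop :=
  forall i j : 'I_q, (i < j)%N -> submxblock A i j = 0.

Definition block_upper (K : comPzRingType) (q : nat) (p : 'I_q -> nat)
  (A : 'M[K]_(\sum_(i < q) p i)) : Prop := block_lower (A^T).

Definition block_triangular (K : comPzRingType) (q : nat) (p : 'I_q -> nat)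
  (A : 'M[K]_(\sum_(i < q) p i)) : Prop := block_lower A \/ block_upper A.

(* Main.v *)
Require Import Defs.
From HB Require Import structures.
From mathcomp Require Import all_boot all_order all_algebra.
Import GRing.Theory.
Local Open Scope ring_scope.

Lemma blk_mul (K : comPzRingType) (q : nat) (p : 'I_q -> nat)
  (A : 'M[K]_(\sum_(i < q) p i)) (v : 'cV[K]_(\sum_(i < q) p i)) i :
  submxcol (A *m v) i = \sum_j submxblock A i j *m submxcol v j.
Proof.
rewrite -[A]submxblockK -[v]submxcolK mul_mxblock_mxrow mxcolK.
by apply: eq_bigr => j _; rewrite submxblockK submxcolK.
Qed.

Lemma blk_scale (K : comPzRingType) (q : nat) (p : 'I_q -> nat)
  (v : 'cV[K]_(\sum_(i < q) p i)) (lam : K) i :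
  submxcol (lam *: v) i = lam *: submxcol v i.
Proof. by apply/matrixP => a b; rewrite !mxE. Qed.

Lemma blk_nz (K : comPzRingType) (q : nat) (p : 'I_q -> nat)
  (v : 'cV[K]_(\sum_(i < q) p i)) :
  v != 0 -> exists i, submxcol v i != 0.
Proof.
move=> nz; apply/existsP; apply: contraNT nz; rewrite negb_exists => /forallP H.
apply/eqP; rewrite -[v]submxcolK -(mxcol0 (p_ := p) 1).
by apply: eq_mxcol => i; apply/eqP; have := H i; rewrite negbK.
Qed.

Lemma lower_case (K : comPzRingType) (q : nat) (p : 'I_q -> nat)
  (A : 'M[K]_(\sum_(i < q) p i)) (lam : K) :
  block_lower A -> is_eigenvalue A lam ->
  exists i : 'I_q, is_eigenvalue (submxblock A i i) lam.
Proof.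
move=> hA [v [nz Hv]].
have [i0 Pi0] := @blk_nz K q p v nz.
case: (@arg_minnP _ i0 (fun i : 'I_q => submxcol v i != 0) (fun i : 'I_q => nat_of_ord i) Pi0) => i Pi Hmin.
exists i; exists (submxcol v i); split => //.
rewrite -blk_scale -Hv blk_mul (bigD1 i) //= big1 ?addr0 // => j ji.
case: (ltngtP i j) => h.
- by rewrite hA // mul0mx.
- have : submxcol v j == 0.
    by apply: contraT => Pj; have := Hmin j Pj; rewrite leqNgt h.
  by move/eqP ->; rewrite mulmx0.
- by move: ji; rewrite (val_inj h) eqxx.
Qed.

Lemma upper_case (K : comPzRingType) (q : nat) (p : 'I_q -> nat)
  (A : 'M[K]_(\sum_(i < q) p i)) (lam : K) :
  block_upper A -> is_eigenvalue A lam ->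
  exists i : 'I_q, is_eigenvalue (submxblock A i i) lam.
Proof.
move=> hA [v [nz Hv]].
have [i0 Pi0] := @blk_nz K q p v nz.
case: (@arg_maxnP _ i0 (fun i : 'I_q => submxcol v i != 0) (fun i : 'I_q => nat_of_ord i) Pi0) => i Pi Hmax.
exists i; exists (submxcol v i); split => //.
rewrite -blk_scale -Hv blk_mul (bigD1 i) //= big1 ?addr0 // => j ji.
case: (ltngtP i j) => h.
- have : submxcol v j == 0.
    by apply: contraT => Pj; have := Hmax j Pj => /= ; rewrite leqNgt h.
  by move/eqP ->; rewrite mulmx0.
- have := hA _ _ h; rewrite -tr_submxblock => /eqP.
  by rewrite trmx_eq0 => /eqP ->; rewrite mul0mx.
- by move: ji; rewrite (val_inj h) eqxx.
Qed.

Theorem lemma2p3 (K : comPzRingType) (q : nat) (p : 'I_q -> nat)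
  (hq : (1 < q)%N) (hp : forall i, (0 < p i)%N)
  (A : 'M[K]_(\sum_(i < q) p i)) (lam : K) :
  block_triangular A -> is_eigenvalue A lam ->
  exists i : 'I_q, is_eigenvalue (submxblock A i i) lam.
Proof.
case=> h; [exact: lower_case | exact: upper_case].
Qed.
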